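(* Let $\kappa$ be a regular infinite cardinal and let $\langle W^\kappa,(T_i)_{i\in\{a,b\}},\theta\rangle$ be the $*$-type space on $S=\{h,t\}$ for players $\{a,b\}$ described in the context. For every ordinal $\alpha<\kappa$ there are $u^\kappa,w^\kappa\in W^\kappa$ such that (1) for every $\kappa$-expression $\varphi$ with $\mathrm{dp}(\varphi)\le\alpha$, $u^\kappa\in\varphi^{W^\kappa}$ iff $w^\kappa\in\varphi^{W^\kappa}$; and (2) there is a $\kappa$-expression $\psi$ with $\mathrm{dp}(\psi)=\alpha+1$ such that $u^\kappa\in\psi^{W^\kappa}$ and $w^\kappa\in(\neg\psi)^{W^\kappa}$.
   Context: Records: for $\alpha\ge1$, a record of length $\alpha$ is $r\in\{0,1\}^\alpha$ such that for every limit $\lambda\le\alpha$ there is $\gamma<\lambda$ with $r(\beta)=0$ for $\gamma\le\beta<\lambda$. Parity: finite ordinals usual (0 even); infinite $\hat\lambda+n$ ($\hat\lambda$ limit) has the parity of $n$. For limit $\lambda\le\alpha$, $o^\lambda(r)$ is the least ordinal $<\lambda$ after which $r$ is $0$ below $\lambda$; $\lambda\text{-par}(r)$ is its parity. $W^0=\{h,t\}$; $W^\alpha$ ($\alpha\ge1$) = triples $(w_0,w_a^\alpha,w_b^\alpha)$, $w_0\in\{h,t\}$, $w_a^\alpha,w_b^\alpha$ records of length $\alpha$; $w^\alpha\upharpoonright\beta$ restricts both records (and $w^\alpha\upharpoonright0=w_0$); $\pi_{\beta,\alpha}(w^\alpha)=w^\alpha\upharpoonright\beta$. For $i\in\{a,b\}$,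 $j$ the other player, $P_i(w^\alpha)$: set of $v^\alpha$ with $v_i^\alpha=w_i^\alpha$; $w_i^\alpha(0)=1\Rightarrow v_0=w_0$; $w_i^\alpha(\beta+1)=1\Rightarrow v_j^\alpha(\beta)=w_j^\alpha(\beta)$ ($\beta+1<\alpha$); $w_i^\alpha(\lambda)=1\Rightarrow\lambda\text{-par}(v_j^\alpha)=\lambda\text{-par}(w_j^\alpha)$ (limit $\lambda<\alpha$). $T_a,T_b$ map $W^\kappa$ into finitely additive probability measures on $\mathrm{Pow}(W^\kappa)$ and satisfy for all $w^\kappa$: (a) $T_i$ constant on $P_i(w^\kappa)$; (b) $T_i(w^\kappa)(P_i(w^\kappa))=1$; (c) $T_i(w^\kappa)(\{u:u_0=w_0\})=1$ if $w_i^\kappa(0)=1$, $\frac12$ otherwise; (d) for $\beta<\kappa$, $T_i(w^\kappa)(\{u:u_j^\kappa(\beta)=w_j^\kappa(\beta)\})=1$ if $w_i^\kappa(\beta+1)=1$, $\frac12$ otherwise; (e) for limit $\lambda<\kappa$, $T_i(w^\kappa)(\{u:\lambda\text{-par}(u_j^\kappa)=\lambda\text{-par}(w_j^\kappa)\})=1$ if $w_i^\kappa(\lambda)=1$, $\frac12$ otherwise; (f) for $\beta<\alpha<\kappa$, $E^\beta\subseteq W^\beta$, $u^\kappa\upharpoonright\alpha=w^\kappa\upharpoonright\alpha$ implies equal $T_i$-values on $\pi_{\beta,\kappa}^{-1}(E^\beta)$ (such $T_a,T_b$ exist). $\theta(w^\kappa)=w_0$. $\kappa$-expressions over $\Sigma_S=\mathrm{Pow}(\{h,t\})$,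 $I=\{a,b\}$: least set containing each $E\subseteq\{h,t\}$ and closed under $\neg$, $B_i^p$ ($p\in[0,1]$), and conjunctions of fewer than $\kappa$ (nonempty) expressions. Semantics: $E^{W^\kappa}=\theta^{-1}(E)$, complement, $(B_i^p\varphi)^{W^\kappa}=\{w:T_i(w)(\varphi^{W^\kappa})\ge p\}$, intersection. Depth: $\mathrm{dp}(E)=0$, $\mathrm{dp}(\neg\varphi)=\mathrm{dp}(\varphi)$, $\mathrm{dp}(B_i^p\varphi)=\mathrm{dp}(\varphi)+1$, $\mathrm{dp}(\bigwedge\Psi)=\sup_{\varphi\in\Psi}\mathrm{dp}(\varphi)$. *)

(* Defs.v *)
From Stdlib Require Import Reals.
Open Scope R_scope.

(* The ordinals below a regular infinite cardinal kappa, presented as a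
   well-ordered type whose order type is a regular infinite initial ordinal. *)
Record RegCard := {
  Ord :> Type;
  olt : Ord -> Ord -> Prop;
  olt_irrefl : forall x, ~ olt x x;
  olt_trans : forall x y z, olt x y -> olt y z -> olt x z;
  olt_total : forall x y, olt x y \/ x = y \/ olt y x;
  olt_wf : well_founded olt;
  (* kappa is a cardinal: it does not inject into any smaller ordinal *)
  ocard : forall x : Ord,
      ~ exists f : Ord -> {y : Ord | olt y x},
          forall a b, f a = f b -> a = b;
  oinf : exists f : nat -> Ord, forall m n, f m = f n -> m = n;
  (* kappa is regular: every subset of size < kappa is bounded below kappa *)
  oreg : forall S : Ord -> Prop,
      (~ exists f : Ord -> {y : Ord | S y}, forall a b, f a = f b -> a = b) ->
      exists b : Ord, forall y, S y -> olt y b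
}.

Section Ordinals.
Variable k : RegCard.

Definition ole (x y : k) : Prop := olt k x y \/ x = y.
Definition is_zero (z : k) : Prop := forall x, ~ olt k x z.
Definition is_limit (l : k) : Prop :=
  (exists x, olt k x l) /\ forall x, olt k x l -> exists y, olt k x y /\ olt k y l.
Definition succ_of (x s : k) : Prop :=
  olt k x s /\ forall y, olt k x y -> ole s y.

Inductive fin_from (g : k) : k -> nat -> Prop :=
| ff_base : fin_from g g 0
| ff_step : forall x y n, fin_from g x n -> succ_of x y -> fin_from g y (S n).

Definition ord_even (b : k) : Prop :=
  exists g n, (is_zero g \/ is_limit g) /\ fin_from g b n /\ Nat.even n = true.

Definition zero_from (r : k -> bool) (g l : k) : Prop :=
  forall b, ole g b -> olt k b l -> r b = false.

(* record of length kappa: condition for each limit l < kappa and for kappa *)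
Definition is_record (r : k -> bool) : Prop :=
  (forall l, is_limit l -> exists g, olt k g l /\ zero_from r g l) /\
  (exists g, forall b, ole g b -> r b = false).

Definition o_lim (l : k) (r : k -> bool) (g : k) : Prop :=
  olt k g l /\ zero_from r g l /\
  forall g', olt k g' l -> zero_from r g' l -> ole g g'.

Definition same_lpar (l : k) (r s : k -> bool) : Prop :=
  forall g d, o_lim l r g -> o_lim l s d -> (ord_even g <-> ord_even d).


Inductive coin := h | t.
Inductive player := pa | pb.
Definition other (i : player) : player := match i with pa => pb | pb => pa end.

Record W := mkW {
  w0 : coin;
  wa : k -> bool;
  wb : k -> bool;
  wa_rec : is_record wa;
  wb_rec : is_record wb
}.

Definition recof (i : player) (w : W) : k -> bool :=
  match i with pa => wa w | pb => wb w end.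

Definition theta (w : W) : coin := w0 w.

Definition P (i : player) (w v : W) : Prop :=
  (forall x, recof i v x = recof i w x) /\
  (forall z, is_zero z -> recof i w z = true -> w0 v = w0 w) /\
  (forall b s, succ_of b s -> recof i w s = true ->
       recof (other i) v b = recof (other i) w b) /\
  (forall l, is_limit l -> recof i w l = true ->
       same_lpar l (recof (other i) v) (recof (other i) w)).

Definition fapm (mu : (W -> Prop) -> R) : Prop :=
  (forall A, 0 <= mu A) /\ mu (fun _ => True) = 1 /\
  (forall A B, (forall x, A x -> B x -> False) ->
     mu (fun x => A x \/ B x) = mu A + mu B).

(* W^b for b < kappa (the record condition on the codomain is omitted,
   which does not change the family of preimages pi^{-1}(E)) *)
Definition Wres (b : k) : Type :=
  (coin * ({x : k | olt k x b} -> bool) * ({x : k | olt k x b} -> bool))%type.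
Definition restrict (b : k) (w : W) : Wres b :=
  (w0 w, fun x => wa w (proj1_sig x), fun x => wb w (proj1_sig x)).

Definition agree_below (a : k) (u w : W) : Prop :=
  w0 u = w0 w /\ forall x, olt k x a -> wa u x = wa w x /\ wb u x = wb w x.

Definition star_type_space (T : player -> W -> (W -> Prop) -> R) : Prop :=
  (forall i w, fapm (T i w)) /\
  (forall i w v, P i w v -> forall A, T i v A = T i w A) /\
  (forall i w, T i w (P i w) = 1) /\
  (forall i w z, is_zero z ->
     T i w (fun u => w0 u = w0 w) = if recof i w z then 1 else / 2) /\
  (forall i w b s, succ_of b s ->
     T i w (fun u => recof (other i) u b = recof (other i) w b)
       = if recof i w s then 1 else / 2) /\
  (forall i w l, is_limit l ->
     T i w (fun u => same_lpar l (recof (other i) u) (recof (other i) w))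
       = if recof i w l then 1 else / 2) /\
  (forall i b a (E : Wres b -> Prop) u w, olt k b a -> agree_below a u w ->
     T i u (fun x => E (restrict b x)) = T i w (fun x => E (restrict b x))).

Inductive expr :=
| Atom (E : coin -> Prop)
| Neg (phi : expr)
| Bel (i : player) (p : R) (phi : expr)
| Conj (b : k) (f : k -> expr).

Fixpoint wf (phi : expr) : Prop :=
  match phi with
  | Atom _ => True
  | Neg p => wf p
  | Bel _ p q => 0 <= p <= 1 /\ wf q
  | Conj b f => (exists x, olt k x b) /\ forall x, olt k x b -> wf (f x)
  end.

Fixpoint sem (T : player -> W -> (W -> Prop) -> R) (phi : expr) : W -> Prop :=
  match phi with
  | Atom E => fun w => E (theta w)
  | Neg p => fun w => ~ sem T p w
  | Bel i p q => fun w => T i w (sem T q) >= p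
  | Conj b f => fun w => forall x, olt k x b -> sem T (f x) w
  end.

Fixpoint depth_le (phi : expr) (a : k) : Prop :=
  match phi with
  | Atom _ => True
  | Neg p => depth_le p a
  | Bel _ _ q => exists g, olt k g a /\ depth_le q g
  | Conj b f => forall x, olt k x b -> depth_le (f x) a
  end.

End Ordinals.

Arguments expr {k}.
Arguments W {k}.

(* Main.v *)
Require Import Defs.
From Stdlib Require Import Reals Lra Lia Classical ClassicalEpsilon FunctionalExtensionality PropExtensionality.
Open Scope R_scope.

Section Ords.
Variable k : RegCard.

Lemma olt_asym : forall x y : k, olt k x y -> olt k y x -> False.
Proof. intros x y H1 H2. exact (olt_irrefl k x (olt_trans k _ _ _ H1 H2)). Qed.

Lemma ole_lt_trans : forall x y z : k, ole k x y -> olt k y z -> olt k x z.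
Proof. intros x y z [H|H] H2; [eapply olt_trans; eauto | subst; auto]. Qed.

Lemma lt_ole_trans : forall x y z : k, olt k x y -> ole k y z -> olt k x z.
Proof. intros x y z H [H2|H2]; [eapply olt_trans; eauto | subst; auto]. Qed.

Lemma not_lt_ole : forall x y : k, ~ olt k x y -> ole k y x.
Proof. intros x y H. destruct (olt_total k x y) as [H1|[H1|H1]];
  [contradiction | right; auto | left; auto]. Qed.

Lemma ole_not_lt : forall x y : k, ole k x y -> ~ olt k y x.
Proof. intros x y [H|H] H2; [eapply olt_asym; eauto | subst; eapply olt_irrefl; eauto]. Qed.

Lemma wf_min : forall S : k -> Prop, (exists x, S x) ->
  exists m, S m /\ forall y, S y -> ole k m y.
Proof.
  intros S [x Hx]. apply NNPP. intro Hn.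
  assert (forall z, ~ S z).
  { intro z. induction z as [z IH] using (well_founded_ind (olt_wf k)).
    intro Hz. apply Hn. exists z. split; auto. intros y Hy.
    apply not_lt_ole. intro Hl. exact (IH y Hl Hy). }
  eapply H; eauto.
Qed.

Lemma ex_zero : exists z : k, is_zero k z.
Proof.
  destruct (oinf k) as [e _].
  destruct (wf_min (fun _ => True)) as [m [_ Hm]]. exists (e O); auto.
  exists m. intros x Hx. apply (ole_not_lt _ _ (Hm x I)). auto.
Qed.

Lemma no_max : forall x : k, exists y, olt k x y.
Proof.
  intro x. apply NNPP. intro Hn.
  assert (Hall : forall y, y <> x -> olt k y x).
  { intros y Hy. destruct (olt_total k y x) as [H|[H|H]]; auto; try contradiction.
    exfalso; apply Hn; eauto. }
  destruct (oinf k) as [e He].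
  set (hh := fun n => if excluded_middle_informative (e (2*n)%nat = x) then e (S (2*n)) else e (2*n)%nat).
  assert (Hhx : forall n, hh n <> x).
  { intros n. unfold hh. destruct excluded_middle_informative as [E|E]; auto.
    intro E2. rewrite <- E2 in E. apply He in E. lia. }
  assert (Hhi : forall n m, hh n = hh m -> n = m).
  { intros n m. unfold hh. destruct excluded_middle_informative; destruct excluded_middle_informative;
    intro E; apply He in E; lia. }
  set (g := fun y => match excluded_middle_informative (exists n, y = hh n) with
     | left p => hh (S (proj1_sig (constructive_indefinite_description _ p)))
     | right _ => if excluded_middle_informative (y = x) then hh O else y end).
  assert (Hgx : forall y, g y <> x).
  { intro y. unfold g. destruct excluded_middle_informative; auto.
    destruct excluded_middle_informative; auto. }
  apply (ocard k x). exists (fun y => exist _ (g y) (Hall _ (Hgx y))).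
  intros a b E. apply (f_equal (@proj1_sig _ _)) in E. simpl in E.
  unfold g in E.
  destruct (excluded_middle_informative (exists n, a = hh n)) as [pa|pa];
  destruct (excluded_middle_informative (exists n, b = hh n)) as [pb|pb].
  - destruct (constructive_indefinite_description _ pa) as [na Ha].
    destruct (constructive_indefinite_description _ pb) as [nb Hb]. simpl in E.
    apply Hhi in E. injection E; intro; subst; auto.
  - destruct (constructive_indefinite_description _ pa) as [na Ha]. simpl in E.
    destruct excluded_middle_informative.
    + apply Hhi in E. discriminate.
    + exfalso; apply pb; eauto.
  - destruct (constructive_indefinite_description _ pb) as [nb Hb]. simpl in E.
    destruct excluded_middle_informative.
    + apply Hhi in E. discriminate.
    + exfalso; apply pa; eauto.
  - destruct (excluded_middle_informative (a = x)); destruct (excluded_middle_informative (b = x)).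
    + congruence.
    + exfalso; apply pb; eauto.
    + exfalso; apply pa; eauto.
    + auto.
Qed.

Lemma ex_succ : forall x : k, exists s, succ_of k x s.
Proof.
  intro x. destruct (wf_min (fun y => olt k x y)) as [m [H1 H2]]. apply no_max.
  exists m. split; auto.
Qed.

Lemma trichotomy : forall x : k, is_zero k x \/ (exists d, succ_of k d x) \/ is_limit k x.
Proof.
  intro x. destruct (classic (is_zero k x)) as [Z|Z]; [left; auto| right].
  destruct (classic (exists d, olt k d x /\ forall y, olt k d y -> ole k x y)) as [[d [H1 H2]]|N].
  - left. exists d. split; auto.
  - right. split.
    + apply NNPP; intro H; apply Z; intros y Hy; apply H; eauto.
    + intros y Hy. apply NNPP; intro H. apply N. exists y. split; auto.
      intros z Hz. apply not_lt_ole. intro Hzx. apply H; eauto.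
Qed.


Definition cid := constructive_indefinite_description.
Definition z0 : k := proj1_sig (cid _ _ ex_zero).
Definition o1 : k := proj1_sig (cid _ _ (no_max z0)).
Definition o2 : k := proj1_sig (cid _ _ (no_max o1)).
Lemma z0_zero : is_zero k z0. Proof. exact (proj2_sig (cid _ _ ex_zero)). Qed.
Lemma z0_o1 : olt k z0 o1. Proof. exact (proj2_sig (cid _ _ (no_max z0))). Qed.
Lemma o1_o2 : olt k o1 o2. Proof. exact (proj2_sig (cid _ _ (no_max o1))). Qed.
Lemma z0_o2 : olt k z0 o2. Proof. eapply olt_trans; [apply z0_o1|apply o1_o2]. Qed.
Lemma o1_nz : ~ is_zero k o1. Proof. intro H. apply (H z0 z0_o1). Qed.

Definition And (A B : @expr k) : @expr k :=
  Conj k o2 (fun y => if excluded_middle_informative (is_zero k y) then A else B).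
Definition Or (A B : @expr k) : @expr k := Neg k (And (Neg k A) (Neg k B)).
Definition Cst (P : Prop) : @expr k := Atom k (fun _ => P).

Variable T : player -> @W k -> (@W k -> Prop) -> R.

Lemma sem_And : forall A B w, sem k T (And A B) w <-> sem k T A w /\ sem k T B w.
Proof.
  intros A B w; unfold And; simpl; split.
  - intro H. split.
    + generalize (H z0 z0_o2). destruct excluded_middle_informative; auto.
      exfalso; apply n, z0_zero.
    + generalize (H o1 o1_o2). destruct excluded_middle_informative; auto.
      exfalso; apply o1_nz; auto.
  - intros [H1 H2] y _. destruct excluded_middle_informative; auto.
Qed.

Lemma sem_Or : forall A B w, sem k T (Or A B) w <-> sem k T A w \/ sem k T B w.
Proof.
  intros A B w; unfold Or. change (~ sem k T (And (Neg k A) (Neg k B)) w <-> sem k T A w \/ sem k T B w).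
  rewrite sem_And. simpl. tauto.
Qed.

Lemma wf_And : forall A B, wf k A -> wf k B -> wf k (And A B).
Proof. intros A B HA HB. simpl. split. exists z0; apply z0_o2.
  intros x _; destruct excluded_middle_informative; auto. Qed.
Lemma wf_Or : forall A B, wf k A -> wf k B -> wf k (Or A B).
Proof. intros; simpl; apply wf_And; simpl; auto. Qed.
Lemma dp_And : forall A B a, depth_le k A a -> depth_le k B a -> depth_le k (And A B) a.
Proof. intros A B a HA HB. simpl. intros x _; destruct excluded_middle_informative; auto. Qed.
Lemma dp_Or : forall A B a, depth_le k A a -> depth_le k B a -> depth_le k (Or A B) a.
Proof. intros; simpl; apply dp_And; simpl; auto. Qed.

Opaque And Or.

Lemma pred_ext : forall (P Q : @W k -> Prop), (forall x, P x <-> Q x) -> P = Q.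
Proof. intros P Q H. apply functional_extensionality; intro x. apply propositional_extensionality; auto. Qed.

Lemma dp_mono : forall phi a b, depth_le k phi a -> ole k a b -> depth_le k phi b.
Proof.
  induction phi; simpl; intros a0 b0 H1 H2; auto.
  - eauto.
  - destruct H1 as [g [H3 H4]]. exists g; split; auto. eapply lt_ole_trans; eauto.
  - intros y Hy; eauto.
Qed.

Hypothesis HT : star_type_space k T.

Lemma invar : forall phi a u w, depth_le k phi a -> agree_below k a u w ->
  (sem k T phi u <-> sem k T phi w).
Proof.
  induction phi; simpl; intros a u w Hd Ha.
  - unfold theta. destruct Ha as [E0 _]. rewrite E0. tauto.
  - rewrite (IHphi a u w Hd Ha). tauto.
  - destruct Hd as [g [Hg Hq]].
    set (E := fun r : Wres k g => exists x, restrict k g x = r /\ sem k T phi x).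
    assert (Hs : sem k T phi = fun x => E (restrict k g x)).
    { apply pred_ext. intro x. unfold E. split; [intro; exists x; auto|].
      intros [y [Hy Hsy]]. apply (IHphi g y x Hq); auto.
      unfold restrict in Hy. injection Hy. intros Hb Ha' H0. split; auto.
      intros z Hz. split.
      - exact (f_equal (fun f => f (exist _ z Hz)) Ha').
      - exact (f_equal (fun f => f (exist _ z Hz)) Hb). }
    destruct HT as [_ [_ [_ [_ [_ [_ Hf]]]]]].
    rewrite Hs. rewrite (Hf i g a E u w Hg Ha). tauto.
  - split; intros H1 x Hx; [rewrite <- (H x a u w) | rewrite (H x a u w)]; auto.
Qed.

Lemma compl : forall i w (A : @W k -> Prop), T i w (fun x => ~ A x) = 1 - T i w A.
Proof.
  intros i w A. destruct HT as [Hf _]. destruct (Hf i w) as [_ [H1 H2]].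
  assert (E : (fun x => A x \/ ~ A x) = (fun _ => True)).
  { apply pred_ext. intro x. split; auto. intros _. apply classic. }
  specialize (H2 A (fun x => ~ A x)). simpl in H2. rewrite E, H1 in H2.
  assert (1 = T i w A + T i w (fun x => ~ A x)) by (apply H2; tauto). lra.
Qed.

Lemma bel_key : forall j w (Z A : @W k -> Prop) (b : bool),
  T j w A = (if b then 1 else / 2) -> (Z = A \/ Z = (fun x => ~ A x)) ->
  ((T j w Z >= 1 \/ T j w (fun x => ~ Z x) >= 1) <-> b = true).
Proof.
  intros j w Z A b HA [E|E]; subst Z; rewrite !compl, HA;
  destruct b; split; intro H; auto; try lra.
Qed.


Definition Ev (l : k) (r : k -> bool) := exists g, o_lim k l r g /\ ord_even k g.

Lemma olim_ex : forall l r, is_record k r -> is_limit k l -> exists g, o_lim k l r g.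
Proof.
  intros l r [Hr _] Hl. destruct (wf_min (fun g => olt k g l /\ zero_from k r g l)) as [m [[H1 H2] H3]].
  - destruct (Hr l Hl) as [g [? ?]]; eauto.
  - exists m. split; [auto|split; [auto|intros g Hg Hz; apply H3; auto]].
Qed.

Lemma olim_uniq : forall l r g d, o_lim k l r g -> o_lim k l r d -> g = d.
Proof.
  intros l r g d [H1 [H2 H3]] [H4 [H5 H6]].
  destruct (H3 d H4 H5) as [E|E]; auto.
  exfalso. exact (ole_not_lt _ _ (H6 g H1 H2) E).
Qed.

Lemma lpar_Ev : forall l r1 r2, is_record k r1 -> is_record k r2 -> is_limit k l ->
  (same_lpar k l r1 r2 <-> (Ev l r1 <-> Ev l r2)).
Proof.
  intros l r1 r2 R1 R2 Hl.
  destruct (olim_ex l r1 R1 Hl) as [g Hg]. destruct (olim_ex l r2 R2 Hl) as [d Hd].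
  unfold same_lpar, Ev. split.
  - intro H. specialize (H g d Hg Hd). split.
    + intros [g' [Hg' E]]. rewrite (olim_uniq _ _ _ _ Hg' Hg) in E. exists d. split; auto. apply H; auto.
    + intros [d' [Hd' E]]. rewrite (olim_uniq _ _ _ _ Hd' Hd) in E. exists g. split; auto. apply H; auto.
  - intros H g' d' Hg' Hd'. rewrite (olim_uniq _ _ _ _ Hg' Hg), (olim_uniq _ _ _ _ Hd' Hd).
    split; intro E.
    + destruct (proj1 H (ex_intro _ g (conj Hg E))) as [d'' [Hd'' E'']].
      rewrite (olim_uniq _ _ _ _ Hd'' Hd) in E''; auto.
    + destruct (proj2 H (ex_intro _ d (conj Hd E))) as [g'' [Hg'' E'']].
      rewrite (olim_uniq _ _ _ _ Hg'' Hg) in E''; auto.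
Qed.

Lemma rec_rec : forall o (w : @W k), is_record k (recof k o w).
Proof. intros [|] w; simpl; [apply wa_rec | apply wb_rec]. Qed.

Lemma limit_expr : forall l o (F : k -> @expr k), is_limit k l ->
  (forall y, olt k y l -> wf k (F y) /\ depth_le k (F y) l /\
      forall w, sem k T (F y) w <-> recof k o w y = true) ->
  exists EV, wf k EV /\ depth_le k EV l /\ forall w, sem k T EV w <-> Ev l (recof k o w).
Proof.
  intros l o F Hl HF.
  set (ZF := fun g => Conj k l (fun y => Or (Cst (~ ole k g y)) (Neg k (F y)))).
  set (OL := fun g => And (Cst (olt k g l)) (And (ZF g)
              (Conj k l (fun g' => Or (Neg k (ZF g')) (Cst (ole k g g')))))).
  exists (Neg k (Conj k l (fun g => Neg k (And (Cst (ord_even k g)) (OL g))))).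
  assert (Hne : exists x, olt k x l) by apply Hl.
  assert (ZFs : forall g w, sem k T (ZF g) w <-> zero_from k (recof k o w) g l).
  { intros g w. unfold ZF, zero_from. simpl. split.
    - intros H b Hb Hbl. specialize (H b Hbl). rewrite sem_Or in H. simpl in H.
      rewrite (proj2 (proj2 (HF b Hbl))) in H. destruct (recof k o w b); tauto.
    - intros H y Hy. rewrite sem_Or. simpl. rewrite (proj2 (proj2 (HF y Hy))).
      destruct (classic (ole k g y)); auto. right. rewrite (H y); auto. }
  assert (OLs : forall g w, sem k T (OL g) w <-> o_lim k l (recof k o w) g).
  { intros g w. unfold OL, o_lim. rewrite !sem_And. cbn [sem wf depth_le]. rewrite ZFs. split.
    - intros [H1 [H2 H3]]. split; auto. split; auto. intros g' Hg' Z.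
      specialize (H3 g' Hg'). rewrite sem_Or in H3. cbn [sem wf depth_le] in H3. rewrite ZFs in H3. tauto.
    - intros [H1 [H2 H3]]. split; auto. split; auto. intros g' Hg'.
      rewrite sem_Or. cbn [sem wf depth_le]. rewrite ZFs. destruct (classic (zero_from k (recof k o w) g' l)); [right; apply H3; auto | left; auto]. }
  split; [|split].
  - simpl. split; [exact Hne|]. intros x Hx. apply wf_And; [exact I|]. unfold OL.
    apply wf_And; [exact I|]. apply wf_And.
    + simpl. split; [exact Hne|]. intros y Hy. apply wf_Or; [exact I| simpl; apply HF; auto].
    + simpl. split; [exact Hne|]. intros y Hy. apply wf_Or; [|exact I]. simpl.
      split; [exact Hne|]. intros z Hz. apply wf_Or; [exact I| simpl; apply HF; auto].
  - simpl. intros x Hx. apply dp_And; [exact I|]. unfold OL.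
    apply dp_And; [exact I|]. apply dp_And.
    + simpl. intros y Hy. apply dp_Or; [exact I| simpl; apply HF; auto].
    + simpl. intros y Hy. apply dp_Or; [|exact I]. simpl.
      intros z Hz. apply dp_Or; [exact I| simpl; apply HF; auto].
  - intro w. cbn [sem wf depth_le]. unfold Ev. split.
    + intro H. apply NNPP. intro H2. apply H. intros g Hg. rewrite sem_And. cbn [sem wf depth_le]. rewrite OLs.
      intros [E O]. apply H2. eauto.
    + intros [g [O E]] H. apply (H g (proj1 O)). rewrite sem_And. cbn [sem wf depth_le]. rewrite OLs. auto.
Qed.

Lemma Kex : forall x j, exists phi, wf k phi /\ (forall a, olt k x a -> depth_le k phi a) /\
  (forall w, sem k T phi w <-> recof k j w x = true).
Proof.
  intro x. induction x as [x IH] using (well_founded_ind (olt_wf k)). intro j.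
  assert (S : exists Z, wf k Z /\ depth_le k Z x /\ forall w, exists A,
     T j w A = (if recof k j w x then 1 else / 2) /\
     (sem k T Z = A \/ sem k T Z = (fun u => ~ A u))).
  { destruct HT as [_ [_ [_ [Hc [Hd [He _]]]]]].
    destruct (trichotomy x) as [Z|[[d Hd']|L]].
    - exists (Atom k (fun c => c = h)). simpl. split; auto. split; auto. intro w.
      exists (fun u => w0 k u = w0 k w). split; [apply Hc; auto|].
      unfold theta. destruct (w0 k w); [left|right]; apply pred_ext; intro u;
      destruct (w0 k u); split; intros; try discriminate; try congruence.
    - destruct (IH d (proj1 Hd') (other j)) as [Z [H1 [H2 H3]]].
      exists Z. split; auto. split; [apply H2, Hd'|]. intro w.
      exists (fun u => recof k (other j) u d = recof k (other j) w d). split; [apply Hd; auto|].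
      destruct (recof k (other j) w d) eqn:E; [left|right]; apply pred_ext; intro u; rewrite H3;
      destruct (recof k (other j) u d); split; intros; try discriminate; try congruence.
    - set (F := fun y => match excluded_middle_informative (olt k y x) with
                 | left p => proj1_sig (cid _ _ (IH y p (other j)))
                 | right _ => Cst True end).
      destruct (limit_expr x (other j) F L) as [EV [H1 [H2 H3]]].
      { intros y Hy. unfold F. destruct excluded_middle_informative as [p|p]; [|contradiction].
        destruct (cid _ _ (IH y p (other j))) as [phi [G1 [G2 G3]]]. simpl. auto. }
      exists EV. split; auto. split; auto. intro w.
      exists (fun u => same_lpar k x (recof k (other j) u) (recof k (other j) w)).
      split; [apply He; auto|].
      destruct (classic (Ev x (recof k (other j) w))) as [E|E]; [left|right]; apply pred_ext; intro u;
      rewrite H3, lpar_Ev; auto using rec_rec; tauto. }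
  destruct S as [Z [H1 [H2 H3]]].
  exists (Or (Bel k j 1 Z) (Bel k j 1 (Neg k Z))). split; [|split].
  - apply wf_Or; simpl; repeat split; auto; lra.
  - intros a Ha. apply dp_Or; simpl; exists x; auto.
  - intro w. rewrite sem_Or. simpl. destruct (H3 w) as [A [HA HZ]].
    apply (bel_key j w _ A); auto.
Qed.

End Ords.

Theorem theorem3 : forall (k : RegCard) (T : player -> @W k -> (@W k -> Prop) -> R),
  star_type_space k T ->
  forall a : k,
  exists u w : @W k,
    (forall phi : @expr k, wf k phi -> depth_le k phi a ->
       (sem k T phi u <-> sem k T phi w)) /\
    (exists (psi : @expr k) (s : k),
       wf k psi /\ succ_of k a s /\ depth_le k psi s /\ ~ depth_le k psi a /\
       sem k T psi u /\ sem k T (Neg k psi) w).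
Proof.
  intros k T HT a.
  destruct (ex_succ k a) as [s Hs].
  set (rz := fun _ : k => false).
  set (ra := fun x : k => if excluded_middle_informative (x = a) then true else false).
  assert (Hrz : is_record k rz).
  { split.
    - intros l [[g Hg] _]. exists g. split; auto. intros b _ _. reflexivity.
    - exists a. intros; reflexivity. }
  assert (Hra : is_record k ra).
  { split.
    - intros l [[g Hg] Hl]. destruct (classic (olt k a l)) as [Hal|Hal].
      + destruct (Hl a Hal) as [y [Hy1 Hy2]]. exists y. split; auto.
        intros b Hb Hbl. unfold ra. destruct excluded_middle_informative as [E|E]; auto.
        subst b. exfalso. exact (olt_irrefl k a (lt_ole_trans k _ _ _ Hy1 Hb)).
      + exists g. split; auto. intros b _ Hbl. unfold ra.
        destruct excluded_middle_informative as [E|E]; auto. subst; contradiction.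
    - exists s. intros b Hb. unfold ra. destruct excluded_middle_informative as [E|E]; auto.
      subst b. exfalso. exact (olt_irrefl k a (lt_ole_trans k _ _ _ (proj1 Hs) Hb)). }
  set (u := mkW k h ra rz Hra Hrz). set (w := mkW k h rz rz Hrz Hrz).
  assert (Hag : agree_below k a u w).
  { split; auto. intros x Hx. simpl. split; auto. unfold ra, rz.
    destruct excluded_middle_informative as [E|E]; auto. subst. exfalso; exact (olt_irrefl k a Hx). }
  destruct (Kex k T HT a pa) as [phi [Hwf [Hdp Hsem]]].
  exists u, w. split.
  - intros psi _ Hd. exact (invar k T HT psi a u w Hd Hag).
  - exists phi, s. split; [auto|split; [auto|split; [apply Hdp, Hs|]]].
    assert (Su : sem k T phi u).
    { apply Hsem. simpl. unfold ra. destruct excluded_middle_informative; congruence. }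
    assert (Sw : ~ sem k T phi w).
    { rewrite Hsem. simpl. unfold rz. discriminate. }
    split; [|split; auto].
    intro Hd. apply Sw. apply (invar k T HT phi a u w Hd Hag). auto.
Qed.
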